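(* If $\gamma\in\Gamma\cap\mathcal{I}_\Gamma$ (i.e. $\gamma\in\Gamma$ with $\gamma^\dagger=\gamma$), then the complete geodesic hyperplane perpendicularly bisecting the geodesic segment from $1$ to $\mu_\Gamma(\gamma,1)$ does so at the point $\gamma$, so that $\gamma$ is the closest point to $1$ on this hyperplane.
   Context: $X$ is a Macfarlane complete orientable finite-volume hyperbolic 3-manifold, and the Kleinian group $\Gamma\cong\pi_1(X)$ is chosen so that its quaternion algebra (the $K$-span of the preimage of $\Gamma$ in $\mathrm{SL}_2(\mathbb{C})$, $K$ the trace field) is $\mathcal{B}=\big(\frac{a,b}{F(\sqrt{-d})}\big)$ with $i^2=a$, $j^2=b$, $ij=-ji$, where $F\subset\mathbb{R}$ and $a,b,d\in F$ are positive; $\Gamma$ is identified with its image in $\mathcal{B}^1/\{\pm1\}$. The involution is $(w+xi+yj+zij)^\dagger=\overline{w}+\overline{x}i+\overline{y}j-\overline{z}ij$; $\mathcal{M}=\{q:q^\dagger=q\}=F\oplus Fi\oplus Fj\oplus\sqrt{-d}Fij$, and $\mathcal{I}_\Gamma=\{p\in\mathcal{M}:\mathrm{tr}(p)>0,\ \mathrm{n}(p)=1\}$ (reduced trace and norm), a hyperboloid model on which $\Gamma$ acts faithfully by hyperbolic isometries via $\mu_\Gamma(\gamma,p)=\gamma p\gamma^\dagger$. *)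

(* Defs.v *)
From HB Require Import structures.
From mathcomp Require Import all_boot all_order all_algebra.
Set Implicit Arguments. Unset Strict Implicit. Unset Printing Implicit Defensive.
Import Order.TTheory GRing.Theory Num.Theory.
Local Open Scope ring_scope.

(* The real field F (ordered field; the paper's F is a subfield of R),
   the field K = F(sqrt(-d)), and the quaternion algebra
   B = (a,b / K) with i^2 = a, j^2 = b, ij = -ji, all written in coordinates. *)

Section Quat.
Variable F : realFieldType.
Variables (a b d : F).

(* An element of K = F(sqrt(-d)) : Kre x + Kim x * sqrt(-d). *)
Record Kel := MkK { Kre : F; Kim : F }.

Definition Kof (r : F) : Kel := MkK r 0.
Definition K0 : Kel := Kof 0.
Definition K1 : Kel := Kof 1.
Definition addK (x y : Kel) : Kel := MkK (Kre x + Kre y) (Kim x + Kim y).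
Definition oppK (x : Kel) : Kel := MkK (- Kre x) (- Kim x).
Definition mulK (x y : Kel) : Kel :=
  MkK (Kre x * Kre y - d * (Kim x * Kim y)) (Kre x * Kim y + Kim x * Kre y).
Definition conjK (x : Kel) : Kel := MkK (Kre x) (- Kim x).

(* A quaternion w + x i + y j + z ij with w,x,y,z in K. *)
Record quat := MkQ { qw : Kel; qx : Kel; qy : Kel; qz : Kel }.

Definition qone : quat := MkQ K1 K0 K0 K0.
Definition qadd (p q : quat) : quat :=
  MkQ (addK (qw p) (qw q)) (addK (qx p) (qx q)) (addK (qy p) (qy q)) (addK (qz p) (qz q)).
Definition qopp (p : quat) : quat :=
  MkQ (oppK (qw p)) (oppK (qx p)) (oppK (qy p)) (oppK (qz p)).
Definition qsub (p q : quat) : quat := qadd p (qopp q).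
Definition qscale (r : F) (p : quat) : quat :=
  MkQ (mulK (Kof r) (qw p)) (mulK (Kof r) (qx p)) (mulK (Kof r) (qy p)) (mulK (Kof r) (qz p)).

(* multiplication in (a,b / K), with k = ij, k^2 = -ab *)
Definition qmul (p q : quat) : quat :=
  let w1 := qw p in let x1 := qx p in let y1 := qy p in let z1 := qz p in
  let w2 := qw q in let x2 := qx q in let y2 := qy q in let z2 := qz q in
  MkQ
    (addK (addK (mulK w1 w2) (mulK (Kof a) (mulK x1 x2)))
          (addK (mulK (Kof b) (mulK y1 y2)) (oppK (mulK (Kof (a * b)) (mulK z1 z2)))))
    (addK (addK (mulK w1 x2) (mulK x1 w2))
          (addK (oppK (mulK (Kof b) (mulK y1 z2))) (mulK (Kof b) (mulK z1 y2))))
    (addK (addK (mulK w1 y2) (mulK y1 w2))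
          (addK (mulK (Kof a) (mulK x1 z2)) (oppK (mulK (Kof a) (mulK z1 x2)))))
    (addK (addK (mulK w1 z2) (mulK z1 w2))
          (addK (mulK x1 y2) (oppK (mulK y1 x2)))).

Definition qconj (p : quat) : quat :=
  MkQ (qw p) (oppK (qx p)) (oppK (qy p)) (oppK (qz p)).

Definition qdagger (p : quat) : quat :=
  MkQ (conjK (qw p)) (conjK (qx p)) (conjK (qy p)) (oppK (conjK (qz p))).

Definition qtr (p : quat) : Kel := addK (qw p) (qw p).
Definition qnorm (p : quat) : Kel :=
  addK (addK (mulK (qw p) (qw p)) (oppK (mulK (Kof a) (mulK (qx p) (qx p)))))
       (addK (oppK (mulK (Kof b) (mulK (qy p) (qy p))))
             (mulK (Kof (a * b)) (mulK (qz p) (qz p)))).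

Definition inM (p : quat) : Prop := qdagger p = p.

Definition inI (p : quat) : Prop :=
  inM p /\ Kim (qtr p) = 0 /\ 0 < Kre (qtr p) /\ qnorm p = K1.

Definition mu (g p : quat) : quat := qmul (qmul g p) (qdagger g).

(* the Minkowski bilinear form on M polarizing the reduced norm:
   <p,q> = tr(p conj(q)) / 2 ; on I_Gamma it equals cosh of the hyperbolic
   distance: cosh d(p,q) = <p,q>. *)
Definition bil (p q : quat) : F := Kre (qtr (qmul p (qconj q))) / 2.
Definition cosh_dist (p q : quat) : F := bil p q.

(* the geodesic segment from p to q in the hyperboloid model:
   points of I_Gamma that are nonnegative F-combinations of p and q *)
Definition geod_segment (p q x : quat) : Prop :=
  inI x /\ exists s t : F, 0 <= s /\ 0 <= t /\ x = qadd (qscale s p) (qscale t q).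

(* the complete geodesic hyperplane perpendicularly bisecting the segment [p,q]:
   I_Gamma intersected with the Minkowski-orthogonal complement of p - q
   (whose normal p - q lies in the plane of the geodesic through p and q) *)
Definition perp_bisector (p q x : quat) : Prop :=
  inI x /\ bil x (qsub p q) = 0.

End Quat.

(* Main.v *)
Require Import Defs.
From mathcomp Require Import all_boot all_order all_algebra.
From mathcomp Require Import ring lra.
Import Order.TTheory GRing.Theory Num.Theory.
Local Open Scope ring_scope.

Section S.
Variable F : realFieldType.
Variables (A B D : F).
Hypotheses (hA : 0 < A) (hB : 0 < B) (hD : 0 < D).

Definition cq (p0 p1 p2 p3 : F) : quat F := MkQ (MkK p0 0) (MkK p1 0) (MkK p2 0) (MkK 0 p3).
Definition Qf (p1 p2 p3 : F) := A * p1 ^+ 2 + B * p2 ^+ 2 + A * B * D * p3 ^+ 2.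

Lemma inI_coords p : inI A B D p ->
  exists p0 p1 p2 p3, p = cq p0 p1 p2 p3 /\ 0 < p0 /\ p0 ^+ 2 - Qf p1 p2 p3 = 1.
Proof. idtac.
case: p => [[w0 w1] [x0 x1] [y0 y1] [z0 z1]].
rewrite /inI /inM /qdagger /qtr /qnorm /conjK /oppK /addK /mulK /Kof /K1 /=.
case=> [hM [_ [h0 hn]]].
have e1 := congr1 (fun p => Kim (qw p)) hM.
have e2 := congr1 (fun p => Kim (qx p)) hM.
have e3 := congr1 (fun p => Kim (qy p)) hM.
have e4 := congr1 (fun p => Kre (qz p)) hM.
have hn1 := congr1 (@Kre F) hn.
simpl in e1, e2, e3, e4, hn1.
have w1z : w1 = 0 by lra.
have x1z : x1 = 0 by lra.
have y1z : y1 = 0 by lra.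
have z0z : z0 = 0 by lra.
subst; exists w0, x0, y0, z1; split => //; split; first lra.
rewrite /Qf -hn1; ring.
Qed.

Lemma cq_inI p0 p1 p2 p3 : 0 < p0 -> p0 ^+ 2 - Qf p1 p2 p3 = 1 -> inI A B D (cq p0 p1 p2 p3).
Proof. idtac.
move=> h0 hn.
rewrite /inI /inM /qdagger /qtr /qnorm /conjK /oppK /addK /mulK /K1 /Kof /cq /=.
split; first by rewrite !oppr0 opprK.
split; first by rewrite addr0.
split; first lra.
congr MkK; last by ring.
rewrite -hn /Qf; ring.
Qed.

Lemma bil_cq p0 p1 p2 p3 q0 q1 q2 q3 :
  bil A B D (cq p0 p1 p2 p3) (cq q0 q1 q2 q3) =
  p0 * q0 - A * p1 * q1 - B * p2 * q2 - A * B * D * p3 * q3.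
Proof. idtac.
rewrite /bil /qtr /qmul /qconj /cq /addK /mulK /oppK /Kof /=.
field => //.
Qed.


Lemma quat_ext (p q : quat F) :
  Kre (qw p) = Kre (qw q) -> Kim (qw p) = Kim (qw q) ->
  Kre (qx p) = Kre (qx q) -> Kim (qx p) = Kim (qx q) ->
  Kre (qy p) = Kre (qy q) -> Kim (qy p) = Kim (qy q) ->
  Kre (qz p) = Kre (qz q) -> Kim (qz p) = Kim (qz q) -> p = q.
Proof.
case: p => [[? ?] [? ?] [? ?] [? ?]]; case: q => [[? ?] [? ?] [? ?] [? ?]] /=.
by move=> -> -> -> -> -> -> -> ->.
Qed.


Lemma qmul1 (p : quat F) : qmul A B D p (qone F) = p.
Proof.
case: p => [[w0 w1] [x0 x1] [y0 y1] [z0 z1]].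
rewrite /qmul /qone /K1 /K0 /Kof /addK /mulK /oppK /=.
by congr (MkQ (MkK _ _) (MkK _ _) (MkK _ _) (MkK _ _)); ring.
Qed.

Lemma dagger_cq g0 g1 g2 g3 : qdagger (cq g0 g1 g2 g3) = cq g0 g1 g2 g3.
Proof. by rewrite /qdagger /cq /conjK /oppK /= !oppr0 opprK. Qed.

Lemma mu_cq g0 g1 g2 g3 : mu A B D (cq g0 g1 g2 g3) (qone F) =
  cq (g0^+2 + Qf g1 g2 g3) (2 * g0 * g1) (2 * g0 * g2) (2 * g0 * g3).
Proof.
rewrite /mu qmul1 dagger_cq.
rewrite {1 2}/cq /qmul /addK /mulK /oppK /Kof /=.
rewrite /cq.
by congr (MkQ (MkK _ _) (MkK _ _) (MkK _ _) (MkK _ _)); rewrite /Qf; ring.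
Qed.

Lemma qadd_scale s t p0 p1 p2 p3 q0 q1 q2 q3 :
  qadd (qscale D s (cq p0 p1 p2 p3)) (qscale D t (cq q0 q1 q2 q3)) =
  cq (s * p0 + t * q0) (s * p1 + t * q1) (s * p2 + t * q2) (s * p3 + t * q3).
Proof.
rewrite {1 2}/cq /qadd /qscale /addK /mulK /Kof /= /cq.
by congr (MkQ (MkK _ _) (MkK _ _) (MkK _ _) (MkK _ _)); ring.
Qed.

Lemma qsub_cq p0 p1 p2 p3 q0 q1 q2 q3 :
  qsub (cq p0 p1 p2 p3) (cq q0 q1 q2 q3) =
  cq (p0 - q0) (p1 - q1) (p2 - q2) (p3 - q3).
Proof.
rewrite {1 2}/cq /qsub /qadd /qopp /addK /oppK /= /cq.
by congr (MkQ (MkK _ _) (MkK _ _) (MkK _ _) (MkK _ _)); ring.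
Qed.

Lemma cq_inj p0 p1 p2 p3 q0 q1 q2 q3 : cq p0 p1 p2 p3 = cq q0 q1 q2 q3 ->
  [/\ p0 = q0, p1 = q1, p2 = q2 & p3 = q3].
Proof. by case. Qed.

Lemma qone_cq : qone F = cq 1 0 0 0.
Proof. by rewrite /qone /cq /K1 /K0 /Kof. Qed.

Lemma rcs x0 x1 x2 x3 g0 g1 g2 g3 : 0 < x0 -> 0 < g0 ->
  x0 ^+ 2 - Qf x1 x2 x3 = 1 -> g0 ^+ 2 - Qf g1 g2 g3 = 1 ->
  1 <= x0 * g0 - (A * x1 * g1 + B * x2 * g2 + A * B * D * x3 * g3).
Proof.
move=> hx hg nx ng.
set Bv := (A * x1 * g1 + B * x2 * g2 + A * B * D * x3 * g3).
have hC : 0 < A * B * D by rewrite !mulr_gt0.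
have hAB : 0 < A * B by rewrite !mulr_gt0.
have h1 : 2 * Bv <= Qf x1 x2 x3 + Qf g1 g2 g3.
  rewrite -subr_ge0.
  have -> : Qf x1 x2 x3 + Qf g1 g2 g3 - 2 * Bv =
     A * (x1 - g1) ^+ 2 + B * (x2 - g2) ^+ 2 + A * B * D * (x3 - g3) ^+ 2
    by rewrite /Qf /Bv; ring.
  apply: addr_ge0; first apply: addr_ge0; (apply: mulr_ge0; [apply: ltW; rewrite ?mulr_gt0 // | exact: sqr_ge0]).
have h2 : Bv ^+ 2 <= Qf x1 x2 x3 * Qf g1 g2 g3.
  rewrite -subr_ge0.
  have -> : Qf x1 x2 x3 * Qf g1 g2 g3 - Bv ^+ 2 =
     A * B * (x1 * g2 - x2 * g1) ^+ 2 + A * (A * B * D) * (x1 * g3 - x3 * g1) ^+ 2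
     + B * (A * B * D) * (x2 * g3 - x3 * g2) ^+ 2 by rewrite /Qf /Bv; ring.
  apply: addr_ge0; first apply: addr_ge0; (apply: mulr_ge0; [apply: ltW; rewrite ?mulr_gt0 // | exact: sqr_ge0]).
have h3 : (1 + Bv) ^+ 2 <= (x0 * g0) ^+ 2.
  have -> : (x0 * g0) ^+ 2 = (1 + Qf x1 x2 x3) * (1 + Qf g1 g2 g3).
    have ex : x0 ^+ 2 = 1 + Qf x1 x2 x3 by rewrite -nx; ring.
    have eg : g0 ^+ 2 = 1 + Qf g1 g2 g3 by rewrite -ng; ring.
    by rewrite exprMn ex eg.
  have -> : (1 + Qf x1 x2 x3) * (1 + Qf g1 g2 g3) =
    1 + (Qf x1 x2 x3 + Qf g1 g2 g3) + Qf x1 x2 x3 * Qf g1 g2 g3 by ring.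
  have -> : (1 + Bv) ^+ 2 = 1 + 2 * Bv + Bv ^+ 2 by ring.
  by apply: lerD => //; rewrite lerD2l.
have hp : 0 < x0 * g0 by rewrite mulr_gt0.
nra.
Qed.
End S.

Theorem corollary5p3 (F : realFieldType) (a b d : F)
  (ha : 0 < a) (hb : 0 < b) (hd : 0 < d)
  (Gamma : quat F -> Prop)
  (Gamma_norm1 : forall g, Gamma g -> qnorm d a b g = K1 F)
  (Gamma_one : Gamma (qone F))
  (Gamma_opp : forall g, Gamma g -> Gamma (qopp g))
  (Gamma_mul : forall g h, Gamma g -> Gamma h -> Gamma (qmul d a b g h))
  (gamma : quat F) (Hgamma : Gamma gamma) (HgI : inI d a b gamma) :
  let P := mu d a b gamma (qone F) in
  [/\ geod_segment d a b (qone F) P gamma,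
      perp_bisector d a b (qone F) P gamma,
      cosh_dist d a b (qone F) gamma = cosh_dist d a b gamma P,
      (forall x, geod_segment d a b (qone F) P x ->
                 perp_bisector d a b (qone F) P x -> x = gamma)
    & (forall x, perp_bisector d a b (qone F) P x ->
                 cosh_dist d a b (qone F) gamma <= cosh_dist d a b (qone F) x)].
Proof.
move=> P.
have [g0 [g1 [g2 [g3 [eg [hg0 hgn]]]]]] := @inI_coords F d a b gamma HgI.
subst gamma. rewrite /P {P} (mu_cq F d a b) (qone_cq F).
have hQ : Qf F d a b g1 g2 g3 = g0 ^+ 2 - 1 by rewrite -hgn; ring.
rewrite hQ.
have hn := hgn; rewrite /Qf in hn.
have g0n : g0 != 0 by rewrite gt_eqF.
split.
- split => //.
  exists (1 / (2 * g0)), (1 / (2 * g0)).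
  have hs : 0 <= 1 / (2 * g0) by rewrite divr_ge0 // ltW // mulr_gt0.
  split => //; split => //.
  rewrite (qadd_scale F b).
  by congr cq; field.
- split => //.
  rewrite (qsub_cq F) (bil_cq F d a b).

  nra.
- rewrite /cosh_dist !(bil_cq F d a b).
  nra.
- move=> x [hxI [s [t [hs [ht ex]]]]] [_ hbx].
  have [x0 [x1 [x2 [x3 [ex' [hx0 hxn]]]]]] := @inI_coords F d a b x hxI.
  rewrite ex' (qadd_scale F b) in ex. rewrite ex' in hbx *. clear ex' hxI.
  case/cq_inj: ex => e0 e1 e2 e3.
  rewrite (qsub_cq F) (bil_cq F d a b) in hbx.
  have hst : (s - t) * (1 - g0 ^+ 2) = 0.
    rewrite e0 e1 e2 e3 in hbx; nra.
  case: (eqVneq (g0 ^+ 2) 1) => [h1 | h1].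
  + have p1 : 0 <= d * g1 ^+ 2 by apply: mulr_ge0; [exact: ltW | exact: sqr_ge0].
    have p2 : 0 <= a * g2 ^+ 2 by apply: mulr_ge0; [exact: ltW | exact: sqr_ge0].
    have p3 : 0 <= d * a * b * g3 ^+ 2 by apply: mulr_ge0; [apply: ltW; rewrite !mulr_gt0 | exact: sqr_ge0].
    have q1 : d * g1 ^+ 2 = 0 by lra.
    have q2 : a * g2 ^+ 2 = 0 by lra.
    have q3 : d * a * b * g3 ^+ 2 = 0 by lra.
    have z1 : g1 = 0.
      move/eqP: q1; rewrite mulf_eq0 (gt_eqF hd) /= sqrf_eq0; exact/eqP.
    have z2 : g2 = 0.
      move/eqP: q2; rewrite mulf_eq0 (gt_eqF ha) /= sqrf_eq0; exact/eqP.
    have z3 : g3 = 0.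
      have dab : d * a * b != 0 by rewrite gt_eqF // !mulr_gt0.
      move/eqP: q3; rewrite mulf_eq0 (negbTE dab) /= sqrf_eq0; exact/eqP.
    have g01 : g0 = 1 by nra.
    subst g1 g2 g3 g0.
    have y1 : x1 = 0 by rewrite e1; ring.
    have y2 : x2 = 0 by rewrite e2; ring.
    have y3 : x3 = 0 by rewrite e3; ring.
    subst x1 x2 x3.
    rewrite /Qf in hxn.
    have : x0 = 1 by nra.
    by move=> ->; congr cq; ring.
  + have est : s = t.
      move/eqP: hst; rewrite mulf_eq0 subr_eq0 => /orP [/eqP //|].
      by rewrite subr_eq0 eq_sym (negbTE h1).
    subst s.
    set k := 2 * t * g0.
    have ex0 : x0 = k * g0 by rewrite e0 /k; ring.
    have ex1 : x1 = k * g1 by rewrite e1 /k; ring.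
    have ex2 : x2 = k * g2 by rewrite e2 /k; ring.
    have ex3 : x3 = k * g3 by rewrite e3 /k; ring.
    have hk2 : k ^+ 2 = 1.
      have : k ^+ 2 * (g0 ^+ 2 - Qf F d a b g1 g2 g3) = 1.
        by rewrite -hxn ex0 ex1 ex2 ex3 /Qf; ring.
      by rewrite hgn mulr1.
    have hk : 0 < k by nra.
    have k1 : k = 1 by nra.
    by rewrite ex0 ex1 ex2 ex3 k1 !mul1r.
- move=> x [hxI hbx].
  have [x0 [x1 [x2 [x3 [ex' [hx0 hxn]]]]]] := @inI_coords F d a b x hxI.
  subst x.
  rewrite (qsub_cq F) (bil_cq F d a b) in hbx.
  rewrite /cosh_dist !(bil_cq F d a b).
  have W := @rcs F d a b hd ha hb x0 x1 x2 x3 g0 g1 g2 g3 hx0 hg0 hxn hgn.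
  nra.
Qed.
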